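(* For every $\epsilon>0$ and $R>0$ there exists an integer $N=N(\epsilon,R)$ such that for every $\theta\in[0,1)$ and every integer $n\geq N$, the set $\varphi_\theta(\mathbb N)$ is $\epsilon$-close in the open disc of radius $R$ centered at $\varphi_\theta(n)$ to some affine lattice which is equivalent, up to an orientation-preserving affine similarity of $\mathbb C$, to the lattice $\mathbb Z+\mathbb Z\,\frac{4i\pi n}{1+4i\pi\{\theta\} n}$.
   Context: For $\theta\in\mathbb R$, the phyllotactic map $\varphi_\theta:\mathbb N\to\mathbb C$ is $\varphi_\theta(n)=\sqrt{n}\,e^{2i\pi\theta n}$, and $\varphi_\theta(\mathbb N)$ is its image. $\{\theta\}=\theta-\lfloor\theta\rfloor\in[0,1)$ is the fractional part. An affine lattice is a set $\alpha+\Gamma$ with $\alpha\in\mathbb C$ and $\Gamma=\mathbb Z\omega_1+\mathbb Z\omega_2$ for $\mathbb R$-linearly independent $\omega_1,\omega_2\in\mathbb C$; two affine lattices are equivalent if one is the image of the other under a map $z\mapsto \lambda z+\beta$ with $\lambda\in\mathbb C^*$, $\beta\in\mathbb C$. For a metric space $E$, $x\in E$, $\epsilon,R>0$, two discrete subsets $A,B\subset E$ are $\epsilon$-close in the open ball of radius $R$ centered at $x$ if there exist subsets $A'\subset A$, $B'\subset B$ containing all points of $A$, respectively $B$, at distance at most $R$ from $x$, and a bijection $\psi:A'\to B'$ with $\mathrm{dist}(a,\psi(a))<\epsilon$ for all $a\in A'$. Here $E=\mathbb C$ with the Euclidean metric. *)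

(* Defs.v *)
From Stdlib Require Import Reals ZArith.
From Coquelicot Require Import Coquelicot.
Open Scope R_scope.

Definition phi (theta : R) (n : nat) : C :=
  Cmult (RtoC (sqrt (INR n)))
        (cos (2 * PI * theta * INR n), sin (2 * PI * theta * INR n)).

Definition phi_image (theta : R) : C -> Prop :=
  fun z => exists n : nat, z = phi theta n.

Definition R_indep (w1 w2 : C) : Prop :=
  forall r s : R, Cplus (Cmult (RtoC r) w1) (Cmult (RtoC s) w2) = RtoC 0 ->
                  r = 0 /\ s = 0.

Definition lattice_set (alpha w1 w2 : C) : C -> Prop :=
  fun z => exists a b : Z,
    z = Cplus alpha (Cplus (Cmult (RtoC (IZR a)) w1) (Cmult (RtoC (IZR b)) w2)).

Definition affine_lattice (L : C -> Prop) : Prop :=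
  exists alpha w1 w2 : C, R_indep w1 w2 /\ forall z, L z <-> lattice_set alpha w1 w2 z.

Definition image_by_similarity (L1 L2 : C -> Prop) : Prop :=
  exists lambda beta : C, lambda <> RtoC 0 /\
    forall z, L2 z <-> exists w, L1 w /\ z = Cplus (Cmult lambda w) beta.

Definition lattice_equiv (L1 L2 : C -> Prop) : Prop :=
  image_by_similarity L1 L2 \/ image_by_similarity L2 L1.

Definition eps_close_in_ball (eps Rad : R) (x : C) (A B : C -> Prop) : Prop :=
  exists A' B' : C -> Prop,
    (forall a, A' a -> A a) /\ (forall b, B' b -> B b) /\
    (forall a, A a -> Cmod (Cminus a x) <= Rad -> A' a) /\
    (forall b, B b -> Cmod (Cminus b x) <= Rad -> B' b) /\
    exists psi : C -> C,
      (forall a, A' a -> B' (psi a)) /\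
      (forall a1 a2, A' a1 -> A' a2 -> psi a1 = psi a2 -> a1 = a2) /\
      (forall b, B' b -> exists a, A' a /\ psi a = b) /\
      (forall a, A' a -> Cmod (Cminus a (psi a)) < eps).

Definition tau (theta : R) (n : nat) : C :=
  Cdiv (0, 4 * PI * INR n) (Cplus (RtoC 1) (0, 4 * PI * frac_part theta * INR n)).

(* Main.v *)
Require Import Defs.
From Stdlib Require Import Reals ZArith Lra Lia Psatz ClassicalEpsilon.
From Coquelicot Require Import Coquelicot.
Open Scope R_scope.

Lemma Rabs_le_between x b : Rabs x <= b -> -b <= x <= b.
Proof. unfold Rabs; destruct Rcase_abs; lra. Qed.

Lemma sin_b0 a : 0 <= a -> a <= 1 -> a - a^3/6 <= sin a <= a.
Proof.
  intros h0 h1. assert (hp := PI2_1).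
  destruct (sin_bound a 0 h0 ltac:(lra)) as [l u].
  replace (sin_approx a (2*0+1)) with (a - a^3/6) in l
    by (unfold sin_approx, sin_term; simpl; field).
  replace (sin_approx a (2*(0+1))) with (a - a^3/6 + a^5/120) in u
    by (unfold sin_approx, sin_term; simpl; field).
  split; [lra|]. assert (a^5/120 <= a^3/6). 
  { assert (0 <= a^3) by (apply pow_le; lra). replace (a^5) with (a^3*(a*a)) by ring. assert (a*a <= 1) by nra. nra. } lra.
Qed.

Lemma sin_err d : Rabs d <= 1 -> Rabs (sin d - d) <= Rabs d ^ 3 / 6.
Proof.
  intros h. destruct (Rle_or_lt 0 d) as [hd|hd].
  - rewrite (Rabs_right d) by lra. rewrite (Rabs_right d) in h by lra.
    destruct (sin_b0 d hd h). rewrite Rabs_left1 by lra. lra.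
  - rewrite (Rabs_left d) by lra. rewrite (Rabs_left d) in h by lra.
    destruct (sin_b0 (-d) ltac:(lra) h). rewrite sin_neg in *.
    rewrite Rabs_right by lra. lra.
Qed.

Lemma cos_b d : Rabs d <= PI/2 -> 1 - d^2/2 <= cos d <= 1 - d^2/2 + d^4/24.
Proof.
  intros h. apply Rabs_le_between in h.
  destruct (cos_bound d 0 ltac:(lra) ltac:(lra)) as [l u].
  replace (cos_approx d (2*0+1)) with (1 - d^2/2) in l
    by (unfold cos_approx, cos_term; simpl; field).
  replace (cos_approx d (2*(0+1))) with (1 - d^2/2 + d^4/24) in u
    by (unfold cos_approx, cos_term; simpl; field).
  lra.
Qed.

Lemma cos_err d : Rabs d <= 1 -> 0 <= 1 - cos d <= d^2/2.
Proof.
  intros h. assert (hp := PI2_1). destruct (cos_b d ltac:(lra)).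
  pose proof (COS_bound d). lra.
Qed.

Lemma cos_low d : Rabs d <= PI/2 -> d^2/3 <= 1 - cos d.
Proof.
  intros h. assert (hp := PI_4). destruct (cos_b d h).
  assert (d^2 <= 4).
  { assert (Rabs d <= 2) by lra. rewrite <- (pow2_abs d).
    assert (0 <= Rabs d) by apply Rabs_pos. nra. }
  assert (0 <= d^2) by nra. nra.
Qed.

Definition F (T D : R) := D^2/2 + T*D^2/2 + T^2/2 + (1+T)*D^3/6 + T*D.

Lemma core s t d T D : 1 <= s -> 0 <= t -> Rabs (t - s) <= T -> Rabs d * s <= D ->
  Rabs d <= 1 ->
  Rabs (t * cos d - s - (t*t - s*s)/(2*s)) + Rabs (t * sin d - s * d) <= F T D / s.
Proof.
  intros hs ht hT hD hd.
  assert (hT0: 0 <= T) by (pose proof (Rabs_pos (t-s)); lra).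
  set (e := Rabs d) in *. assert (he: 0 <= e) by apply Rabs_pos.
  destruct (cos_err d hd) as [c1 c2].
  pose proof (sin_err d hd) as sn. fold e in sn.
  assert (hd2 : d^2 = e^2) by (unfold e; rewrite pow2_abs; auto).
  assert (ht2: t <= s + T) by (apply Rabs_le_between in hT; lra).
  assert (hts: (t - s)^2 <= T^2) by (rewrite <- (pow2_abs (t-s)); pose proof (Rabs_pos (t-s)); nra).
  assert (R1: Rabs (t * cos d - s - (t*t - s*s)/(2*s)) <= t*(1 - cos d) + (t-s)^2/(2*s)).
  { replace (t * cos d - s - (t*t - s*s)/(2*s)) with (-(t*(1-cos d) + (t-s)^2/(2*s))) by (field; lra).
    rewrite Rabs_Ropp. rewrite Rabs_right; [lra|].
    apply Rle_ge. apply Rplus_le_le_0_compat; [nra|]. unfold Rdiv; apply Rmult_le_pos; [apply pow2_ge_0|]; apply Rlt_le, Rinv_0_lt_compat; lra. }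
  assert (R2: Rabs (t * sin d - s * d) <= t * (e^3/6) + T * e).
  { replace (t * sin d - s * d) with (t * (sin d - d) + (t - s) * d) by ring.
    eapply Rle_trans; [apply Rabs_triang|]. rewrite !Rabs_mult.
    rewrite (Rabs_right t) by lra. fold e. apply Rplus_le_compat; [nra|].
    pose proof (Rabs_pos (t-s)). nra. }
  apply Rmult_le_reg_r with s; [lra|]. replace (F T D / s * s) with (F T D) by (field; lra).
  assert (hes : e*s <= D) by exact hD. assert (0 <= D) by nra.
  assert (A1 : t*(1-cos d)*s <= D^2/2 + T*D^2/2).
  { assert (H0a: t*(1-cos d)*s <= (s+T)*(e^2/2)*s).
    { rewrite <- hd2. apply Rmult_le_compat_r; [lra|]. apply Rmult_le_compat; lra. }
    assert (hes2: (e*s)^2 <= D^2) by (apply pow_incr; nra).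
    assert (0 <= T*e^2) by (apply Rmult_le_pos; [lra|apply pow2_ge_0]).
    assert (H1: T*e^2*s <= T*e^2*(s*s)) by (apply Rmult_le_compat_l; nra).
    assert (T*(e*s)^2 <= T*D^2) by (apply Rmult_le_compat_l; lra).
    replace ((s+T)*(e^2/2)*s) with ((e*s)^2/2 + T*e^2*s/2) in H0a by field.
    replace (T*e^2*(s*s)) with (T*(e*s)^2) in H1 by field.
    lra. }
  assert (A2 : (t-s)^2/(2*s)*s <= T^2/2) by (field_simplify; lra).
  assert (A3 : t*(e^3/6)*s <= (1+T)*D^3/6).
  { assert (he3: 0 <= e^3) by (apply pow_le; lra).
    assert (H0a: t*(e^3/6)*s <= (s+T)*(e^3/6)*s).
    { apply Rmult_le_compat_r; [lra|]. apply Rmult_le_compat_r; lra. }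
    assert (hes3: (e*s)^3 <= D^3) by (apply pow_incr; nra).
    assert (H1: s*e^3*s <= s*e^3*s*s) by (assert (0 <= s*e^3*s) by (apply Rmult_le_pos; [apply Rmult_le_pos|]; lra); nra).
    assert (H2: T*e^3*s <= T*e^3*s*(s*s)).
    { assert (0 <= T*e^3*s) by (apply Rmult_le_pos; [apply Rmult_le_pos|]; lra).
      assert (1 <= s*s) by nra. nra. }
    assert (H3: T*(e*s)^3 <= T*D^3) by (apply Rmult_le_compat_l; lra).
    replace ((s+T)*(e^3/6)*s) with (s*e^3*s/6 + T*e^3*s/6) in H0a by field.
    replace (s*e^3*s*s) with ((e*s)^3) in H1 by field.
    replace (T*e^3*s*(s*s)) with (T*(e*s)^3) in H2 by field.
    lra. }
  assert (A4 : T*e*s <= T*D) by (rewrite Rmult_assoc; apply Rmult_le_compat_l; lra).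
  unfold F. nra.
Qed.


Lemma Cmod_pair_le a b : Cmod (a,b) <= Rabs a + Rabs b.
Proof.
  unfold Cmod; cbn [fst snd]. rewrite <- (sqrt_pow2 (Rabs a + Rabs b)) by (pose proof (Rabs_pos a); pose proof (Rabs_pos b); lra).
  apply sqrt_le_1_alt. rewrite <- (pow2_abs a), <- (pow2_abs b).
  pose proof (Rabs_pos a); pose proof (Rabs_pos b). nra.
Qed.

Lemma Cmod_pair_sq a b : Cmod (a,b) ^ 2 = a^2 + b^2.
Proof. unfold Cmod; cbn [fst snd]. rewrite pow2_sqrt; [ring|nra]. Qed.

Lemma Cmod_pair_ge a b : Rabs a <= Cmod (a,b) /\ Rabs b <= Cmod (a,b).
Proof.
  pose proof (Cmod_pair_sq a b). pose proof (Cmod_ge_0 (a,b)).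
  split; rewrite <- (Rabs_right (Cmod _)) by lra; apply Rsqr_le_abs_0; unfold Rsqr; nra.
Qed.

Lemma cosZ x m : cos (x + 2 * IZR m * PI) = cos x.
Proof.
  destruct (Z.le_ge_cases 0 m) as [h|h].
  - rewrite <- (Z2Nat.id m h), <- INR_IZR_INZ. apply cos_period.
  - replace m with (- Z.of_nat (Z.to_nat (-m)))%Z by lia.
    rewrite opp_IZR, <- INR_IZR_INZ. set (k := Z.to_nat (-m)).
    rewrite <- (cos_period (x + 2 * - INR k * PI) k). f_equal. ring.
Qed.

Lemma sinZ x m : sin (x + 2 * IZR m * PI) = sin x.
Proof.
  destruct (Z.le_ge_cases 0 m) as [h|h].
  - rewrite <- (Z2Nat.id m h), <- INR_IZR_INZ. apply sin_period.
  - replace m with (- Z.of_nat (Z.to_nat (-m)))%Z by lia.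
    rewrite opp_IZR, <- INR_IZR_INZ. set (k := Z.to_nat (-m)).
    rewrite <- (sin_period (x + 2 * - INR k * PI) k). f_equal. ring.
Qed.

Lemma Int_part_unique r q : IZR q <= r < IZR q + 1 -> Int_part r = q.
Proof.
  intros [h1 h2]. destruct (base_Int_part r) as [b1 b2].
  assert (IZR (Int_part r - q) < 1) by (rewrite minus_IZR; lra).
  assert (IZR (q - Int_part r) < 1) by (rewrite minus_IZR; lra).
  apply lt_IZR in H. apply lt_IZR in H0. lia.
Qed.

Definition uu (th : R) (n : nat) : C := (cos (2*PI*th*INR n), sin (2*PI*th*INR n)).
Definition w1 th n : C := Cmult (uu th n) (/(2*sqrt (INR n)), 2*PI*th*sqrt (INR n)).
Definition w2 th n : C := Cmult (uu th n) (0, 2*PI*sqrt (INR n)).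
Definition lat th n (p q : Z) : C :=
  Cplus (phi th n) (Cplus (Cmult (RtoC (IZR p)) (w1 th n)) (Cmult (RtoC (IZR q)) (w2 th n))).
Definition kk (n j : nat) : Z := (Z.of_nat j - Z.of_nat n)%Z.
Definition mk th (k : Z) : Z := Int_part (th * IZR k + /2).

Lemma Cmod_uu th n z : Cmod (Cmult (uu th n) z) = Cmod z.
Proof.
  rewrite Cmod_mult. unfold uu, Cmod; simpl.
  replace (cos (2 * PI * th * INR n) * (cos (2 * PI * th * INR n) * 1) +
    sin (2 * PI * th * INR n) * (sin (2 * PI * th * INR n) * 1)) with 1
  by (pose proof (sin2_cos2 (2 * PI * th * INR n)); unfold Rsqr in *; lra).
  rewrite sqrt_1. ring.
Qed.

Lemma x_repr th n : phi th n = Cmult (uu th n) (sqrt (INR n), 0).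
Proof. unfold phi, uu, RtoC, Cmult; simpl. f_equal; ring. Qed.

Lemma lat_repr th n p q : lat th n p q =
  Cmult (uu th n) (sqrt (INR n) + IZR p / (2 * sqrt (INR n)),
                   2*PI*sqrt (INR n) * (th * IZR p + IZR q)).
Proof. unfold lat, w1, w2, phi, uu, RtoC, Cmult, Cplus; simpl. f_equal; unfold Rdiv; ring. Qed.

Lemma INR_kk n j : INR j = INR n + IZR (kk n j).
Proof. unfold kk. rewrite minus_IZR, <- !INR_IZR_INZ. ring. Qed.

Lemma phi_repr th n j m :
  let d := 2*PI*(th * IZR (kk n j) - IZR m) in
  phi th j = Cmult (uu th n) (sqrt (INR j) * cos d, sqrt (INR j) * sin d).
Proof.
  intros d.
  assert (e : 2*PI*th*INR j = (2*PI*th*INR n + d) + 2 * IZR m * PI)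
    by (unfold d; rewrite (INR_kk n j); ring).
  unfold phi, uu, RtoC, Cmult; simpl. rewrite e, cosZ, sinZ, cos_plus, sin_plus.
  f_equal; ring.
Qed.


Lemma phi_mod th j : Cmod (phi th j) = sqrt (INR j).
Proof.
  unfold phi. rewrite Cmod_mult, Cmod_R, Rabs_right by (apply Rle_ge, sqrt_pos).
  unfold Cmod; simpl.
  replace (cos (2 * PI * th * INR j) * (cos (2 * PI * th * INR j) * 1) +
    sin (2 * PI * th * INR j) * (sin (2 * PI * th * INR j) * 1)) with 1
  by (pose proof (sin2_cos2 (2 * PI * th * INR j)); unfold Rsqr in *; lra).
  rewrite sqrt_1. ring.
Qed.

Lemma phi_inj th j j' : phi th j = phi th j' -> j = j'.
Proof.
  intros h. assert (sqrt (INR j) = sqrt (INR j')) by (rewrite <- (phi_mod th j), <- (phi_mod th j'), h; auto).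
  apply sqrt_inj in H; try apply pos_INR. apply INR_eq; auto.
Qed.


Lemma Cminus_pair a b c d : Cminus (a,b) (c,d) = (a - c, b - d).
Proof. unfold Cminus, Cplus, Copp; simpl. f_equal; ring. Qed.

Lemma Cminus_uu th n a b : Cminus (Cmult (uu th n) a) (Cmult (uu th n) b) = Cmult (uu th n) (Cminus a b).
Proof. ring. Qed.

Lemma sqrt_n_pos n : (1 <= n)%nat -> 0 < sqrt (INR n).
Proof. intros h. apply sqrt_lt_R0. apply lt_0_INR. lia. Qed.

Lemma lat_minus_x th n p q : Cminus (lat th n p q) (phi th n) =
  Cmult (uu th n) (IZR p / (2 * sqrt (INR n)), 2*PI*sqrt (INR n) * (th * IZR p + IZR q)).
Proof.
  rewrite lat_repr, x_repr, Cminus_uu, Cminus_pair. f_equal. f_equal; ring.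
Qed.

Lemma phi_minus_x th n j m :
  let d := 2*PI*(th * IZR (kk n j) - IZR m) in
  Cminus (phi th j) (phi th n) =
  Cmult (uu th n) (sqrt (INR j) * cos d - sqrt (INR n), sqrt (INR j) * sin d).
Proof.
  intros d. rewrite (phi_repr th n j m), x_repr. fold d. rewrite Cminus_uu, Cminus_pair.
  f_equal. f_equal; ring.
Qed.

Lemma phi_minus_lat th n j m : (1 <= n)%nat ->
  let d := 2*PI*(th * IZR (kk n j) - IZR m) in
  let t := sqrt (INR j) in let s := sqrt (INR n) in
  Cminus (phi th j) (lat th n (kk n j) (- m)) =
  Cmult (uu th n) (t * cos d - s - (t*t - s*s)/(2*s), t * sin d - s * d).
Proof.
  intros hn d t s. pose proof (sqrt_n_pos n hn) as hs.
  rewrite (phi_repr th n j m), lat_repr. fold d. fold t s. rewrite Cminus_uu, Cminus_pair.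
  assert (e : IZR (kk n j) = t*t - s*s).
  { unfold t, s. rewrite !sqrt_sqrt by apply pos_INR. rewrite (INR_kk n j). ring. }
  rewrite e, opp_IZR. f_equal. unfold d. f_equal.
  - fold s. field. fold s in hs. lra.
  - fold s. rewrite e. ring.
Qed.

Lemma pair_zero a b : Cmod (a,b) = 0 -> a = 0 /\ b = 0.
Proof.
  intros h. destruct (Cmod_pair_ge a b) as [h1 h2]. rewrite h in h1, h2.
  pose proof (Rabs_pos a). pose proof (Rabs_pos b). split.
  - destruct (Req_dec a 0); auto. apply Rabs_pos_lt in H1. lra.
  - destruct (Req_dec b 0); auto. apply Rabs_pos_lt in H1. lra.
Qed.

Lemma lat_inj th n p q p' q' : (1 <= n)%nat -> lat th n p q = lat th n p' q' -> p = p'.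
Proof.
  intros hn h. pose proof (sqrt_n_pos n hn) as hs.
  assert (h2 : Cminus (lat th n p q) (phi th n) = Cminus (lat th n p' q') (phi th n)) by (rewrite h; auto).
  rewrite !lat_minus_x in h2.
  assert (h3 : Cmod (Cminus (Cmult (uu th n) (IZR p / (2 * sqrt (INR n)), 2 * PI * sqrt (INR n) * (th * IZR p + IZR q)))
      (Cmult (uu th n) (IZR p' / (2 * sqrt (INR n)), 2 * PI * sqrt (INR n) * (th * IZR p' + IZR q')))) = 0)
    by (rewrite h2; unfold Cminus; rewrite Cplus_opp_r; apply Cmod_0).
  rewrite Cminus_uu, Cmod_uu, Cminus_pair in h3.
  apply pair_zero in h3. destruct h3 as [h3 _].
  apply eq_IZR. apply Rmult_eq_reg_r with (/(2*sqrt (INR n))).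
  - unfold Rdiv in h3. lra.
  - apply Rgt_not_eq, Rlt_gt, Rinv_0_lt_compat. lra.
Qed.

Lemma R_indep_w th n : (1 <= n)%nat -> R_indep (w1 th n) (w2 th n).
Proof.
  intros hn r t h. pose proof (sqrt_n_pos n hn) as hs.
  assert (e : Cplus (Cmult (RtoC r) (w1 th n)) (Cmult (RtoC t) (w2 th n)) =
    Cmult (uu th n) (r * / (2 * sqrt (INR n)), 2*PI*sqrt (INR n) * (th * r + t))).
  { unfold w1, w2, uu, RtoC, Cmult, Cplus; simpl. f_equal; ring. }
  rewrite e in h. apply (f_equal Cmod) in h. rewrite Cmod_uu, Cmod_R, Rabs_R0 in h.
  apply pair_zero in h. destruct h as [h1 h2].
  assert (r = 0).
  { apply Rmult_eq_reg_r with (/(2*sqrt (INR n))). lra.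
    apply Rgt_not_eq, Rlt_gt, Rinv_0_lt_compat. lra. }
  subst r. split; auto.
  assert (0 < 2*PI*sqrt (INR n)) by (pose proof PI_RGT_0; nra).
  nra.
Qed.

Lemma w1_nz th n : (1 <= n)%nat -> w1 th n <> RtoC 0.
Proof.
  intros hn h. pose proof (sqrt_n_pos n hn) as hs.
  apply (f_equal Cmod) in h. unfold w1 in h. rewrite Cmod_uu, Cmod_R, Rabs_R0 in h.
  apply pair_zero in h. destruct h as [h _].
  assert (0 < / (2 * sqrt (INR n))) by (apply Rinv_0_lt_compat; lra). lra.
Qed.

Lemma frac_id th : 0 <= th < 1 -> frac_part th = th.
Proof.
  intros h. destruct (Int_part_frac_part_spec th 0 th h) as [_ e]; [simpl; ring|]. auto.
Qed.

Lemma w1_tau th n : (1 <= n)%nat -> 0 <= th < 1 -> Cmult (w1 th n) (tau th n) = w2 th n.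
Proof.
  intros hn hth. pose proof (sqrt_n_pos n hn) as hs.
  unfold tau. rewrite frac_id by auto.
  set (a := (/ (2 * sqrt (INR n)), 2 * PI * th * sqrt (INR n)) : C).
  set (b := (0, 2 * PI * sqrt (INR n)) : C).
  set (N := (0, 4 * PI * INR n) : C).
  set (D := Cplus (RtoC 1) (0, 4 * PI * th * INR n)).
  assert (HD : D <> RtoC 0).
  { intros h. unfold D, RtoC, Cplus in h; simpl in h. injection h. lra. }
  assert (E : Cmult a N = Cmult b D).
  { unfold a, b, N, D, RtoC, Cmult, Cplus; simpl.
    assert (en : INR n = sqrt (INR n) * sqrt (INR n)) by (rewrite sqrt_sqrt; auto; apply pos_INR).
    set (s := sqrt (INR n)) in *. clearbody s. rewrite en.
    f_equal.
    - ring.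
    - field. lra. }
  unfold w1, w2. fold a b.
  transitivity (Cmult (uu th n) (Cdiv (Cmult a N) D)).
  - field. auto.
  - rewrite E. field. auto.
Qed.


Lemma Cmod_le_sq z S : Cmod z <= S -> Cmod z ^ 2 <= S ^ 2.
Proof. intros h. apply pow_incr. split; [apply Cmod_ge_0|auto]. Qed.

Lemma abs_from_sq x S : 0 <= S -> x^2 <= S^2 -> Rabs x <= S.
Proof.
  intros hS h. rewrite <- (Rabs_right S) by lra. apply Rsqr_le_abs_0. unfold Rsqr. nra.
Qed.

Lemma fwd th n j S : (1 <= n)%nat -> 0 < S -> 2*S <= sqrt (INR n) -> 1 <= sqrt (INR n) ->
  Cmod (Cminus (phi th j) (phi th n)) <= S ->
  Cmod (Cminus (phi th j) (lat th n (kk n j) (- mk th (kk n j)))) <= F S (2*S) / sqrt (INR n).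
Proof.
  intros hn hS hsS hs1 h.
  pose proof (sqrt_n_pos n hn) as hs.
  set (m := mk th (kk n j)).
  pose proof (base_Int_part (th * IZR (kk n j) + /2)) as [b1 b2]. fold (mk th (kk n j)) in b1, b2. fold m in b1, b2.
  rewrite (phi_minus_x th n j m) in h. rewrite (phi_minus_lat th n j m hn).
  set (k := kk n j) in *.
  set (d := 2 * PI * (th * IZR k - IZR m)) in *.
  set (t := sqrt (INR j)) in *. set (s := sqrt (INR n)) in *.
  assert (ht : 0 <= t) by apply sqrt_pos.
  pose proof PI_RGT_0 as hpi. pose proof PI_4 as hpi4.
  assert (hd : Rabs d <= PI).
  { apply Rabs_le. unfold d. split; nra. }
  rewrite Cmod_uu in h |- *. apply Cmod_le_sq in h. rewrite Cmod_pair_sq in h.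
  assert (eq : (t * cos d - s) ^ 2 + (t * sin d) ^ 2 = (t - s)^2 + 2*t*s*(1 - cos d)).
  { pose proof (sin2_cos2 d). unfold Rsqr in H. 
    replace ((t * cos d - s) ^ 2 + (t * sin d) ^ 2) with (t^2 * (sin d * sin d + cos d * cos d) - 2*t*s*cos d + s^2) by ring.
    rewrite H. ring. }
  rewrite eq in h. pose proof (COS_bound d) as [c1 c2].
  assert (hts : Rabs (t - s) <= S).
  { apply abs_from_sq; [lra|]. assert (0 <= 2*t*s*(1-cos d)) by (apply Rmult_le_pos; nra). lra. }
  apply Rabs_le_between in hts.
  assert (ht2 : s/2 <= t) by lra.
  destruct (Rle_or_lt (Rabs d) (PI/2)) as [hd2|hd2].
  - pose proof (cos_low d hd2) as cl.
    assert (hds : Rabs d * s <= 2*S).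
    { assert (h1 : s*s*(d^2/3) <= 2*t*s*(1 - cos d)).
      { assert (0 <= d^2/3) by (pose proof (pow2_ge_0 d); lra).
        assert (s*s <= 2*t*s) by nra.
        apply Rmult_le_compat; nra. }
      assert (h2 : 0 <= (t-s)^2) by apply pow2_ge_0.
      assert (h3 : (Rabs d * s)^2 <= (2*S)^2).
      { rewrite Rpow_mult_distr, pow2_abs. nra. }
      apply abs_from_sq in h3; [|lra].
      rewrite Rabs_right in h3; auto. apply Rle_ge, Rmult_le_pos; [apply Rabs_pos|lra]. }
    assert (hd1 : Rabs d <= 1).
    { assert (Rabs d * s <= 1 * s) by lra. apply Rmult_le_reg_r in H; lra. }
    eapply Rle_trans; [apply Cmod_pair_le|].
    apply core; try lra. apply Rabs_le; lra.
  - exfalso. assert (cos d <= 0).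
    { destruct (Rle_or_lt 0 d).
      - rewrite Rabs_right in hd2, hd by lra. apply cos_le_0; lra.
      - rewrite Rabs_left in hd2, hd by lra. rewrite <- cos_neg. apply cos_le_0; lra. }
    assert (0 <= (t-s)^2) by apply pow2_ge_0.
    assert (2*t*s*(1 - cos d) >= 2*t*s) by nra.
    nra.
Qed.

Lemma rev th n p q Rad : (1 <= n)%nat -> 0 < Rad -> 2*Rad <= sqrt (INR n) -> 1 <= sqrt (INR n) ->
  Cmod (Cminus (lat th n p q) (phi th n)) <= Rad ->
  exists j, lat th n p q = lat th n (kk n j) (- mk th (kk n j)) /\
   Cmod (Cminus (phi th j) (lat th n p q)) <= F (2*Rad) Rad / sqrt (INR n).
Proof.
  intros hn hR hsR hs1 h.
  pose proof (sqrt_n_pos n hn) as hs.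
  pose proof PI_RGT_0 as hpi. pose proof PI2_1 as hpi2.
  rewrite lat_minus_x, Cmod_uu in h.
  destruct (Cmod_pair_ge (IZR p / (2 * sqrt (INR n))) (2 * PI * sqrt (INR n) * (th * IZR p + IZR q))) as [g1 g2].
  assert (en : INR n = sqrt (INR n) * sqrt (INR n)) by (rewrite sqrt_sqrt; auto; apply pos_INR).
  set (s := sqrt (INR n)) in *.
  assert (hp : Rabs (IZR p) <= 2*Rad*s).
  { assert (Rabs (IZR p / (2*s)) <= Rad) by lra.
    unfold Rdiv in H. rewrite Rabs_mult, (Rabs_right (/ (2*s))) in H
      by (apply Rle_ge, Rlt_le, Rinv_0_lt_compat; lra).
    apply Rmult_le_reg_r with (/(2*s)). apply Rinv_0_lt_compat; lra.
    replace (2*Rad*s*/(2*s)) with Rad by (field; lra). auto. }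
  assert (hq : Rabs (th * IZR p + IZR q) * (2*PI*s) <= Rad).
  { rewrite Rabs_mult, (Rabs_right (2*PI*s)) in g2 by nra. lra. }
  assert (hq2 : Rabs (th * IZR p + IZR q) < /2).
  { assert (Rabs (th * IZR p + IZR q) * (2*PI*s) < /2 * (2*PI*s)) by nra.
    apply Rmult_lt_reg_r in H; nra. }
  apply Rabs_le_between in hp. apply Rabs_lt_between in hq2.
  assert (hpn : (- Z.of_nat n <= p)%Z).
  { apply le_IZR. rewrite opp_IZR, <- INR_IZR_INZ. nra. }
  exists (Z.to_nat (Z.of_nat n + p)).
  assert (hk : kk n (Z.to_nat (Z.of_nat n + p)) = p) by (unfold kk; lia).
  assert (hm : mk th p = (- q)%Z).
  { unfold mk. apply Int_part_unique. rewrite opp_IZR. lra. }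
  rewrite hk, hm, Z.opp_involutive. split; auto.
  pose proof (phi_minus_lat th n (Z.to_nat (Z.of_nat n + p)) (- q) hn) as e.
  rewrite hk, Z.opp_involutive in e. simpl in e. rewrite e, Cmod_uu.
  fold s. rewrite opp_IZR.
  eapply Rle_trans; [apply Cmod_pair_le|].
  set (t := sqrt (INR (Z.to_nat (Z.of_nat n + p)))).
  assert (ht : 0 <= t) by apply sqrt_pos.
  assert (et : t * t = s * s + IZR p).
  { unfold t. rewrite sqrt_sqrt by apply pos_INR. rewrite (INR_kk n), hk. lra. }
  apply core; auto.
  - apply Rabs_le. split.
    + assert ((t - s) * (t + s) = IZR p) by nra. nra.
    + assert ((t - s) * (t + s) = IZR p) by nra. nra.
  - replace (2 * PI * (th * IZR p - - IZR q)) with ((th * IZR p + IZR q) * (2*PI)) by ring.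
    rewrite Rabs_mult, (Rabs_right (2*PI)) by lra. lra.
  - replace (2 * PI * (th * IZR p - - IZR q)) with ((th * IZR p + IZR q) * (2*PI)) by ring.
    rewrite Rabs_mult, (Rabs_right (2*PI)) by lra.
    assert (Rabs (th * IZR p + IZR q) * (2*PI*s) <= 1 * s) by lra.
    assert (Rabs (th * IZR p + IZR q) * (2*PI) <= 1).
    { apply Rmult_le_reg_r with s; [lra|]. rewrite Rmult_assoc. lra. }
    lra.
Qed.


Lemma F_mono T D T' D' : 0 <= T <= T' -> 0 <= D <= D' -> F T D <= F T' D'.
Proof.
  intros [h1 h2] [h3 h4]. unfold F.
  assert (D^2 <= D'^2) by (apply pow_incr; lra).
  assert (D^3 <= D'^3) by (apply pow_incr; lra).
  assert (T^2 <= T'^2) by (apply pow_incr; lra).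
  assert (0 <= D^2) by (apply pow_le; lra).
  assert (0 <= D^3) by (apply pow_le; lra).
  assert (T*D^2 <= T'*D'^2) by (apply Rmult_le_compat; lra).
  assert ((1+T)*D^3 <= (1+T')*D'^3) by (apply Rmult_le_compat; lra).
  assert (T*D <= T'*D') by (apply Rmult_le_compat; lra).
  lra.
Qed.

Definition idx th (z : C) : nat := epsilon (inhabits 0%nat) (fun j => z = phi th j).
Definition psi th n (z : C) : C := lat th n (kk n (idx th z)) (- mk th (kk n (idx th z))).

Lemma idx_spec th z : phi_image th z -> z = phi th (idx th z).
Proof. intros h. unfold idx. apply (epsilon_spec (inhabits 0%nat) (fun j => z = phi th j)). exact h. Qed.

Lemma idx_phi th j : idx th (phi th j) = j.
Proof.
  symmetry. apply (phi_inj th). apply idx_spec. exists j. reflexivity.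
Qed.

Theorem theorem1 :
  forall eps Rad : R, 0 < eps -> 0 < Rad ->
  exists N : nat, forall (theta : R), 0 <= theta < 1 ->
    forall n : nat, (N <= n)%nat ->
      exists L : C -> Prop,
        affine_lattice L /\
        lattice_equiv L (lattice_set (RtoC 0) (RtoC 1) (tau theta n)) /\
        eps_close_in_ball eps Rad (phi theta n) (phi_image theta) L.
Proof.
  intros eps Rad he hR.
  set (Sr := Rad + 1).
  set (M := F (2*Sr) (2*Sr)).
  assert (hM : 0 <= M).
  { unfold M, F. assert (0 <= Sr) by (unfold Sr; lra).
    assert (0 <= (2*Sr)^2) by apply pow2_ge_0. assert (0 <= (2*Sr)^3) by (apply pow_le; lra).
    assert (0 <= Sr^2) by apply pow2_ge_0. nra. }
  set (K := 2*Sr + M + M/eps + 2).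
  assert (hMe : 0 <= M/eps) by (unfold Rdiv; apply Rmult_le_pos; [lra|apply Rlt_le, Rinv_0_lt_compat; lra]).
  destruct (INR_archimed 1 (K^2) ltac:(lra)) as [N hN].
  exists N. intros th hth n hn.
  assert (hK : 0 <= K) by (unfold K, Sr; lra).
  assert (hs : K < sqrt (INR n)).
  { rewrite <- (sqrt_pow2 K hK). apply sqrt_lt_1_alt. split; [apply pow2_ge_0|].
    apply le_INR in hn. lra. }
  assert (hn1 : (1 <= n)%nat).
  { destruct n; [|lia]. exfalso. rewrite INR_0, sqrt_0 in hs. lra. }
  set (s := sqrt (INR n)) in *.
  assert (hSr : 0 < Sr) by (unfold Sr; lra).
  assert (hs1 : 1 <= s) by (unfold K in hs; lra).
  assert (hsS : 2*Sr <= s) by (unfold K in hs; lra).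
  assert (hsR : 2*Rad <= s) by (unfold K, Sr in *; lra).
  assert (hMs : M / s < eps).
  { apply Rmult_lt_reg_r with s; [lra|]. replace (M/s*s) with M by (field; lra).
    assert (M/eps < s) by (unfold K in hs; lra).
    apply Rmult_lt_compat_r with (r := eps) in H; auto. replace (M/eps*eps) with M in H by (field; lra). lra. }
  assert (hM1 : M / s < 1).
  { apply Rmult_lt_reg_r with s; [lra|]. replace (M/s*s) with M by (field; lra). unfold K in hs. lra. }
  assert (hF1 : F Sr (2*Sr) / s <= M / s).
  { unfold Rdiv. apply Rmult_le_compat_r; [apply Rlt_le, Rinv_0_lt_compat; lra|].
    apply F_mono; unfold Sr; lra. }
  assert (hF2 : F (2*Rad) Rad / s <= M / s).
  { unfold Rdiv. apply Rmult_le_compat_r; [apply Rlt_le, Rinv_0_lt_compat; lra|].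
    apply F_mono; unfold Sr; lra. }
  set (x := phi th n).
  exists (lattice_set x (w1 th n) (w2 th n)).
  split; [|split].
  - exists x, (w1 th n), (w2 th n). split; [apply R_indep_w; auto|tauto].
  - right. exists (w1 th n), x. split; [apply w1_nz; auto|]. intros z. split.
    + intros [a [b ->]].
      exists (Cplus (RtoC 0) (Cplus (Cmult (RtoC (IZR a)) (RtoC 1)) (Cmult (RtoC (IZR b)) (tau th n)))).
      split; [exists a, b; reflexivity|]. rewrite <- (w1_tau th n) by auto. ring.
    + intros [w [[a [b ->]] ->]]. exists a, b. rewrite <- (w1_tau th n) by auto. ring.
  - set (A' := fun z => phi_image th z /\ Cmod (Cminus z x) <= Sr).
    set (B' := fun b => exists a, A' a /\ psi th n a = b).
    assert (hpsiL : forall a, lattice_set x (w1 th n) (w2 th n) (psi th n a)).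
    { intros a. unfold psi. eexists; eexists; reflexivity. }
    exists A', B'. split; [|split; [|split; [|split]]].
    + intros a [h _]. exact h.
    + intros b [a [_ <-]]. apply hpsiL.
    + intros a ha hd. split; auto. unfold Sr; fold x in hd; lra.
    + intros b [p [q hb]] hd.
      assert (hb' : b = lat th n p q) by exact hb.
      rewrite hb' in hd |- *. fold x in hd.
      destruct (rev th n p q Rad hn1 hR hsR hs1 hd) as [j [e1 e2]].
      exists (phi th j). split.
      * split; [exists j; reflexivity|].
        assert (ed : Cminus (phi th j) x = Cplus (Cminus (phi th j) (lat th n p q)) (Cminus (lat th n p q) x)) by ring.
        rewrite ed. eapply Rle_trans; [apply Cmod_triangle|]. fold s in e2. unfold Sr. lra.
      * unfold psi. rewrite idx_phi. auto.
    + exists (psi th n). split; [|split; [|split]].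
      * intros a ha. exists a. split; auto.
      * intros a1 a2 [h1 _] [h2 _] e.
        rewrite (idx_spec th a1 h1), (idx_spec th a2 h2).
        unfold psi in e. apply lat_inj in e; auto. unfold kk in e. f_equal. lia.
      * intros b [a [ha e]]. exists a. split; auto.
      * intros a [h1 h2]. rewrite (idx_spec th a h1) in h2 |- *. unfold psi. rewrite idx_phi.
        pose proof (fwd th n (idx th a) Sr hn1 hSr hsS hs1 h2) as hf. fold s in hf. lra.
Qed.
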